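(* Let $Q\subseteq 2^{\mathbb{N}^k}$ be a clopen quantifier. Then for every $n$ and every $a\in\mathbb{N}^n$ the orbit $\{g(a):g\in\mathrm{Aut}(Q)\}$ is definable in $\mathscr{L}_{\omega\omega}(Q)$.
   Context: A quantifier of type $\langle k\rangle$ on $\mathbb{N}$ is a family $Q$ of subsets of $\mathbb{N}^k$, identified with a subset of $2^{\mathbb{N}^k}$ (product topology). A permutation $f$ of $\mathbb{N}$ fixes $Q$ if $A\in Q\iff f(A)\in Q$ for all $A\subseteq\mathbb{N}^k$, where $f$ acts coordinatewise on tuples and $f(A)=\{f(a):a\in A\}$; $\mathrm{Aut}(Q)$ is the group of such permutations. $\mathscr{L}_{\omega\omega}(Q)$ is first-order logic extended by formulas $Qx\,\varphi(x,y)$ ($x$ a $k$-tuple of variables) with $\mathbb{N}\models Qx\,\varphi(x,b)$ iff $\{a\in\mathbb{N}^k:\mathbb{N}\models\varphi(a,b)\}\in Q$. A set $B\subseteq\mathbb{N}^n$ is definable in $\mathscr{L}_{\omega\omega}(Q)$ if there is a formula $\varphi(x_1,\dots,x_n)$ whose only non-logical symbol is $Q$ such that $b\in B\iff\mathbb{N}\models\varphi(b)$. *)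

(* Defs.v *)
From mathcomp Require Import all_boot.
Set Implicit Arguments. Unset Strict Implicit. Unset Printing Implicit Defensive.

Definition subset_k (k : nat) := k.-tuple nat -> Prop.
Definition quantifier (k : nat) := subset_k k -> Prop.

(* Product topology on 2^{N^k}: U is open iff every A in U has a basic
   open neighbourhood (determined by finitely many coordinates) inside U. *)
Definition open_set (k : nat) (U : quantifier k) : Prop :=
  forall A : subset_k k, U A ->
    exists F : seq (k.-tuple nat),
      forall B : subset_k k, (forall x, x \in F -> (A x <-> B x)) -> U B.

Definition clopen (k : nat) (Q : quantifier k) : Prop :=
  open_set Q /\ open_set (fun A => ~ Q A).

Definition image_set (k : nat) (f : nat -> nat) (A : subset_k k) : subset_k k :=
  fun y => exists a, A a /\ y = map_tuple f a.

Definition Aut (k : nat) (Q : quantifier k) (f : nat -> nat) : Prop :=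
  bijective f /\ forall A : subset_k k, Q A <-> Q (image_set f A).

(* Syntax of L_{omega omega}(Q): first-order logic with equality, no
   non-logical symbols, plus the quantifier Q binding a k-tuple of
   variables. Variables are natural numbers. *)
Inductive formula (k : nat) : Type :=
| FEq  : nat -> nat -> formula k
| FNot : formula k -> formula k
| FAnd : formula k -> formula k -> formula k
| FOr  : formula k -> formula k -> formula k
| FEx  : nat -> formula k -> formula k
| FAll : nat -> formula k -> formula k
| FQ   : k.-tuple nat -> formula k -> formula k.

Definition upd (e : nat -> nat) (x a : nat) : nat -> nat :=
  fun v => if v == x then a else e v.

Fixpoint upds (e : nat -> nat) (xs vs : seq nat) : nat -> nat :=
  match xs, vs with
  | x :: xs', v :: vs' => upds (upd e x v) xs' vs'
  | _, _ => e
  end.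

Fixpoint sat (k : nat) (Q : quantifier k) (e : nat -> nat) (phi : formula k)
  : Prop :=
  match phi with
  | FEq x y => e x = e y
  | FNot p => ~ sat Q e p
  | FAnd p q => sat Q e p /\ sat Q e q
  | FOr p q => sat Q e p \/ sat Q e q
  | FEx x p => exists a, sat Q (upd e x a) p
  | FAll x p => forall a, sat Q (upd e x a) p
  | FQ xs p => Q (fun a : k.-tuple nat => sat Q (upds e xs a) p)
  end.

Definition definable (k : nat) (Q : quantifier k) (n : nat)
  (B : n.-tuple nat -> Prop) : Prop :=
  exists phi : formula k, forall e : nat -> nat,
    sat Q e phi <-> B [tuple e i | i < n].

Definition aut_orbit (k : nat) (Q : quantifier k) (n : nat) (a : n.-tuple nat)
  : n.-tuple nat -> Prop :=
  fun b => exists g, Aut Q g /\ b = map_tuple g a.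

(* Main.v *)
Require Import Defs.
From mathcomp Require Import all_boot.
From Stdlib Require Import Classical ClassicalEpsilon.
Set Implicit Arguments. Unset Strict Implicit. Unset Printing Implicit Defensive.

Definition agree_upto k (M : nat) (A B : subset_k k) :=
  forall t : k.-tuple nat, pickle t < M -> (A t <-> B t).
Definition good k (Q : quantifier k) (A : subset_k k) m :=
  exists N, forall B C, agree_upto m A B -> agree_upto m A C ->
    agree_upto N B C -> (Q B <-> Q C).
Definition setc k (A : subset_k k) m (b : bool) : subset_k k :=
  fun t => if pickle t == m then is_true b else A t.

Lemma foldr_max_ge (T : eqType) (f : T -> nat) (L : seq T) x :
  x \in L -> f x <= foldr maxn 0 (map f L).
Proof.
elim: L => //= y L IH; rewrite in_cons => /orP [/eqP ->|h]; first by rewrite leq_maxl.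
by rewrite leq_max IH ?orbT.
Qed.

Lemma step k (Q : quantifier k) A m : ~ good Q A m ->
  exists b, ~ good Q (setc A m b) m.+1.
Proof.
move=> ng; apply: NNPP => H; apply: ng.
have G : forall b, good Q (setc A m b) m.+1.
  by move=> b; apply: NNPP => nb; apply: H; exists b.
case: (G true) => N1 H1; case: (G false) => N2 H2.
exists (maxn (maxn N1 N2) m.+1) => B C AB AC BC.
have BC' : forall N, N <= maxn (maxn N1 N2) m.+1 -> agree_upto N B C.
  by move=> N hN t ht; apply: BC; apply: leq_trans ht hN.
have agr : forall (b : bool) (B' : subset_k k), agree_upto m A B' ->
    (b <-> exists t, pickle t = m /\ B' t) -> agree_upto m.+1 (setc A m b) B'.
  move=> b B' AB' hb t ht; rewrite /setc; case: eqP => [ept|nept].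
    split.
      move=> bt; have [t' [pt' Bt']] := (proj1 hb) bt.
      have -> : t = t' by apply: (pcan_inj pickleK); apply/eqP; rewrite ept pt'.
      done.
    by move=> Bt; apply/(proj2 hb); exists t.
  apply: AB'; rewrite ltnS leq_eqVlt in ht; case/orP: ht => // /eqP //.
have mB : forall t, pickle t = m -> (B t <-> C t).
  move=> t pt; apply: (BC' m.+1); last by rewrite pt.
  by rewrite leq_max leqnn orbT.
have eBC : (exists t, pickle t = m /\ B t) <-> (exists t, pickle t = m /\ C t).
  split=> -[t [pt h]]; exists t; split=> //; by apply/(mB t pt).
case: (classic (exists t, pickle t = m /\ B t)) => hc.
  apply: H1.
  - by apply: agr => //; split.
  - by apply: agr => //; split => // _; apply/eBC.
  - by apply: BC'; rewrite !leq_max leqnn.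
apply: H2.
- by apply: agr => //; split => // /hc.
- by apply: agr => //; split => // /eBC /hc.
- by apply: BC'; rewrite !leq_max leqnn !orbT.
Qed.

Lemma compact k (Q : quantifier k) : clopen Q ->
  exists N, forall B C, agree_upto N B C -> (Q B <-> Q C).
Proof.
move=> [op cl]; apply: NNPP => nG.
have ng0 : ~ good Q (fun _ => False) 0.
  move=> [N HN]; apply: nG; exists N => B C; apply: HN => t; by rewrite ltn0.
have ch : forall A m, exists b, ~ good Q A m -> ~ good Q (setc A m b) m.+1.
  move=> A m; case: (classic (good Q A m)) => h; first by exists true.
  have [b hb] := step h; by exists b.
pose F A m := proj1_sig (constructive_indefinite_description _ (ch A m)).
have hF : forall A m, ~ good Q A m -> ~ good Q (setc A m (F A m)) m.+1.
  by move=> A m; exact: (proj2_sig (constructive_indefinite_description _ (ch A m))).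
pose sq := fix sq (m : nat) : subset_k k :=
  match m with 0 => fun _ => False | m'.+1 => setc (sq m') m' (F (sq m') m') end.
have bad : forall m, ~ good Q (sq m) m by elim=> [|m IH] //=; apply: hF.
have stab : forall t m j, pickle t < m -> sq (m + j) t = sq m t.
  move=> t m j h; elim: j => [|j IH]; first by rewrite addn0.
  rewrite addnS /= /setc.
  have -> : (pickle t == m + j) = false.
    by apply/negbTE; rewrite neq_ltn (leq_trans h) ?leq_addr.
  exact: IH.
pose X t := sq (pickle t).+1 t.
have agX : forall m t, pickle t < m -> (sq m t <-> X t).
  by move=> m t h; rewrite /X -(subnKC h) stab.
have fin : forall (L : seq (k.-tuple nat)), exists M, forall t, t \in L -> pickle t < M.
  move=> L; exists (foldr maxn 0 [seq (pickle t).+1 | t <- L]) => t ht.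
  exact: (foldr_max_ge (fun t => (pickle t).+1) ht).
case: (classic (Q X)) => qx.
  have [L HL] := op X qx; have [M hM] := fin L.
  apply: (bad M); exists 0 => B C AB AC _.
  have QB : forall B', agree_upto M (sq M) B' -> Q B'.
    move=> B' AB'; apply: HL => x hx; have h := hM x hx.
    by split=> y; [apply/(AB' x h)/(agX M x h) | apply/(agX M x h)/(AB' x h)].
  by split=> _; [apply: QB | apply: QB].
have [L HL] := cl X qx; have [M hM] := fin L.
apply: (bad M); exists 0 => B C AB AC _.
have QB : forall B', agree_upto M (sq M) B' -> ~ Q B'.
  move=> B' AB'; apply: HL => x hx; have h := hM x hx.
  by split=> y; [apply/(AB' x h)/(agX M x h) | apply/(agX M x h)/(AB' x h)].
by split=> h; [case: (QB B AB) | case: (QB C AC)].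
Qed.


Definition supp k (Q : quantifier k) (s : seq nat) :=
  forall A B : subset_k k,
    (forall t : k.-tuple nat, all (fun x => x \in s) t -> (A t <-> B t)) -> (Q A <-> Q B).

Lemma nat_min (P : nat -> Prop) : (exists n, P n) -> exists n, P n /\ forall m, P m -> n <= m.
Proof.
move=> [n Pn]; apply: NNPP => H.
have : forall n m, m <= n -> ~ P m.
  elim=> [|n' IH] m hm Pm.
    apply: H; exists m; split=> // m' _; by move: hm; rewrite leqn0 => /eqP ->.
  move: hm; rewrite leq_eqVlt => /orP [/eqP em|hm]; last by apply: (IH m).
  apply: H; exists m; split=> // m' Pm'; rewrite leqNgt; apply/negP => lt.
  by apply: (IH m') => //; rewrite -ltnS -em.
by move/(_ n n (leqnn n)).
Qed.

Lemma bound_pickle k N : exists K, forall t : k.-tuple nat,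
  pickle t < N -> all (fun x => x < K) t.
Proof.
elim: N => [|N [K HK]]; first by exists 0 => t; rewrite ltn0.
case: (classic (exists t0 : k.-tuple nat, pickle t0 = N)) => [[t0 pt0]|nt].
  exists (maxn K (foldr maxn 0 (map id t0)).+1) => t; rewrite ltnS leq_eqVlt.
  case/orP => [/eqP pt|lt].
    have -> : t = t0 by apply: (pcan_inj pickleK); rewrite pt pt0.
    apply/allP => x hx; rewrite leq_max; apply/orP; right; rewrite ltnS.
    exact: (foldr_max_ge id hx).
  apply/allP => x hx; rewrite leq_max; apply/orP; left.
  by move/allP: (HK t lt); apply.
exists K => t; rewrite ltnS leq_eqVlt; case/orP => [/eqP pt|]; last exact: HK.
by case: nt; exists t.
Qed.

Lemma supp_iota k (Q : quantifier k) : clopen Q -> exists K, supp Q (iota 0 K).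
Proof.
move=> cQ; have [N HN] := compact cQ; have [K HK] := bound_pickle k N.
exists K => A B h; apply: HN => t pt; apply: h; apply/allP => x hx.
by rewrite mem_iota /=; move/allP: (HK t pt); apply.
Qed.

Lemma min_supp k (Q : quantifier k) : clopen Q ->
  exists s, uniq s /\ supp Q s /\ forall s', uniq s' -> supp Q s' -> size s <= size s'.
Proof.
move=> cQ; have [K HK] := supp_iota cQ.
have [m [[s [us [ss ps]]] hm]] :=
  @nat_min (fun m => exists s, uniq s /\ size s = m /\ supp Q s)
    (ex_intro _ K (ex_intro _ (iota 0 K) (conj (iota_uniq 0 K) (conj (size_iota 0 K) HK)))).
exists s; split=> //; split=> // s' us' ps'; rewrite ss; apply: hm; by exists s'.
Qed.


Definition Gx (u v : seq nat) (x : nat) : nat :=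
  if x \in u then nth 0 v (index x u)
  else if x \in [seq y <- v | y \notin u]
       then nth 0 [seq y <- u | y \notin v] (index x [seq y <- v | y \notin u])
       else x.

Lemma size_l (u v : seq nat) : uniq u -> uniq v -> size u = size v ->
  size [seq y <- v | y \notin u] = size [seq y <- u | y \notin v].
Proof.
move=> uu uv suv.
have c : count (mem u) v = count (mem v) u.
  rewrite -!size_filter; apply: perm_size; apply: uniq_perm; try exact: filter_uniq.
  by move=> x; rewrite !mem_filter andbC.
have e1 : count (mem u) v + count (fun y => y \notin u) v = size v := count_predC (mem u) v.
have e2 : count (mem v) u + count (fun y => y \notin v) u = size u := count_predC (mem v) u.
rewrite !size_filter.
by rewrite -(addKn (count (mem u) v) (count _ v)) e1 c -suv -e2 addKn.
Qed.

Lemma Gx_cancel (u v : seq nat) : uniq u -> uniq v -> size u = size v ->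
  cancel (Gx u v) (Gx v u).
Proof.
move=> uu uv suv x; rewrite /Gx.
have sl := size_l uu uv suv.
case xu: (x \in u).
  have hi : index x u < size v by rewrite -suv index_mem xu.
  rewrite (mem_nth 0 hi) index_uniq ?suv //; exact: (nth_index 0 xu).
case xl: (x \in [seq y <- v | y \notin u]).
  have hi : index x [seq y <- v | y \notin u] < size [seq y <- u | y \notin v]
    by rewrite -sl index_mem xl.
  have yl : nth 0 [seq y <- u | y \notin v] (index x [seq y <- v | y \notin u])
             \in [seq y <- u | y \notin v] by exact: mem_nth.
  move: (yl); rewrite mem_filter => /andP [/negbTE yv yu]; rewrite yv yu /=.
  by rewrite index_uniq ?filter_uniq // nth_index.
have xv : x \in v = false.
  by apply/negbTE/negP => xv; move: xl; rewrite mem_filter xv xu.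
rewrite xv; case: ifP => // ; by rewrite mem_filter xu andbF.
Qed.

Lemma ext_bij (N : nat) (df wf : nat -> nat) :
  (forall i j, i < N -> j < N -> (df i = df j <-> wf i = wf j)) ->
  exists g h, cancel g h /\ cancel h g /\ forall i, i < N -> g (df i) = wf i.
Proof.
move=> H.
pose L := [seq df i | i <- iota 0 N].
pose u := undup L.
pose v := [seq wf (index x L) | x <- u].
have uu : uniq u by exact: undup_uniq.
have idx : forall x, x \in L -> index x L < N /\ df (index x L) = x.
  move=> x xL; have sL : size L = N by rewrite size_map size_iota.
  have iL : index x L < N by rewrite -sL index_mem.
  split=> //.
  have := nth_index 0 xL; rewrite (nth_map 0); last by rewrite size_iota.
  by rewrite nth_iota.
have uv : uniq v.
  rewrite map_inj_in_uniq // => x y; rewrite !mem_undup => xL yL e.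
  have [ix dx] := idx x xL; have [iy dy] := idx y yL.
  by rewrite -dx -dy; apply/(H _ _ ix iy).
have suv : size u = size v by rewrite size_map.
exists (Gx u v), (Gx v u); split; first exact: Gx_cancel.
split; first exact: Gx_cancel.
move=> i iN.
have dL : df i \in L by apply: map_f; rewrite mem_iota.
have du : df i \in u by rewrite mem_undup.
rewrite /Gx du (nth_map 0); last by rewrite index_mem.
rewrite nth_index //.
have [ix dx] := idx _ dL.
by apply/(H _ _ ix iN).
Qed.


Lemma upds_notin (e : nat -> nat) xs vs x : x \notin xs -> upds e xs vs x = e x.
Proof.
elim: xs e vs => [|y xs IH] e [|v vs] //=.
rewrite in_cons negb_or => /andP [xy xn]; rewrite IH // /upd.
by rewrite (negbTE xy).
Qed.

Lemma upds_nth (e : nat -> nat) xs vs j : uniq xs -> size vs = size xs ->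
  j < size xs -> upds e xs vs (nth 0 xs j) = nth 0 vs j.
Proof.
elim: xs e vs j => [|y xs IH] e [|v vs] j //= /andP [yn ux] [sv] hj.
case: j hj => [|j] hj /=.
  by rewrite upds_notin // /upd eqxx.
by rewrite IH.
Qed.

Definition Fdef k (Q : quantifier k) (R : (nat -> nat) -> Prop) :=
  exists phi : formula k, forall e, sat Q e phi <-> R e.

Lemma fd_ext k (Q : quantifier k) R R' : Fdef Q R -> (forall e, R e <-> R' e) -> Fdef Q R'.
Proof. move=> [p hp] h; exists p => e; rewrite hp; exact: h. Qed.

Lemma fd_eq k (Q : quantifier k) i j : Fdef Q (fun e => e i = e j).
Proof. by exists (FEq k i j). Qed.

Lemma fd_not k (Q : quantifier k) R : Fdef Q R -> Fdef Q (fun e => ~ R e).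
Proof. move=> [p hp]; exists (FNot p) => e /=; by rewrite hp. Qed.

Lemma fd_and k (Q : quantifier k) R1 R2 : Fdef Q R1 -> Fdef Q R2 ->
  Fdef Q (fun e => R1 e /\ R2 e).
Proof. move=> [p hp] [q hq]; exists (FAnd p q) => e /=; by rewrite hp hq. Qed.

Lemma fd_andl k (Q : quantifier k) (T : eqType) (l : seq T) (R : T -> (nat -> nat) -> Prop) :
  (forall x, x \in l -> Fdef Q (R x)) -> Fdef Q (fun e => forall x, x \in l -> R x e).
Proof.
elim: l => [|y l IH] h.
  by exists (FEq k 0 0) => e /=; split=> // _ x.
have [p hp] := h y (mem_head y l).
have [q hq] := IH (fun x hx => h x (@mem_behead _ (y :: l) x hx)).
exists (FAnd p q) => e /=; rewrite hp hq; split.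
  by move=> [a b] x; rewrite in_cons => /orP [/eqP ->|]; [|apply: b].
by move=> H; split; [apply: H; exact: mem_head| move=> x hx; apply: H; rewrite in_cons hx orbT].
Qed.

Lemma fd_orl k (Q : quantifier k) (T : eqType) (l : seq T) (R : T -> (nat -> nat) -> Prop) :
  (forall x, x \in l -> Fdef Q (R x)) -> Fdef Q (fun e => exists x, x \in l /\ R x e).
Proof.
elim: l => [|y l IH] h.
  by exists (FNot (FEq k 0 0)) => e /=; split=> // -[x []].
have [p hp] := h y (mem_head y l).
have [q hq] := IH (fun x hx => h x (@mem_behead _ (y :: l) x hx)).
exists (FOr p q) => e /=; rewrite hp hq; split.
  case=> [a|[x [hx b]]]; first by exists y; split; [exact: mem_head|].
  by exists x; split; [rewrite in_cons hx orbT|].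
move=> [x []]; rewrite in_cons => /orP [/eqP ->|hx] b; [by left|right; by exists x].
Qed.

Lemma fd_iff k (Q : quantifier k) R (P : Prop) : Fdef Q R -> Fdef Q (fun e => R e <-> P).
Proof.
move=> [p hp]; case: (classic P) => hP.
  by exists p => e; rewrite hp; split=> [h|[_ h]]; [split=> // _ | exact: h].
exists (FNot p) => e /=; rewrite hp.
by split=> [h|[h1 h2] r]; [split=> [/h|/hP] | exact: hP (h1 r)].
Qed.

Fixpoint exs k (vs : seq nat) (p : formula k) : formula k :=
  match vs with [::] => p | v :: vs' => FEx v (exs vs' p) end.

Lemma sat_exs k (Q : quantifier k) vs p e :
  sat Q e (exs vs p) <-> exists vals, size vals = size vs /\ sat Q (upds e vs vals) p.
Proof.
elim: vs e => [|v vs IH] e /=.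
  by split=> [h|[vals [_ h]]]; [exists [::] | case: vals h].
split.
  by move=> [a /IH [vals [sv h]]]; exists (a :: vals); rewrite /= sv.
move=> [[|a vals] [sv h]] //; exists a; apply/IH; exists vals; split=> //; by case: sv.
Qed.

Lemma fd_exs k (Q : quantifier k) R vs : Fdef Q R ->
  Fdef Q (fun e => exists vals, size vals = size vs /\ R (upds e vs vals)).
Proof.
move=> [p hp]; exists (exs vs p) => e; rewrite sat_exs.
by split=> -[vals [sv h]]; exists vals; split=> //; apply/hp.
Qed.

Lemma fd_Q k (Q : quantifier k) R (xs : k.-tuple nat) :
  (forall A B : subset_k k, (forall t, A t <-> B t) -> (Q A <-> Q B)) ->
  Fdef Q R -> Fdef Q (fun e => Q (fun t => R (upds e xs t))).
Proof.
move=> ext [p hp]; exists (FQ xs p) => e /=; apply: ext => t; exact: hp.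
Qed.


Definition pb (X : Prop) : bool := if excluded_middle_informative X then true else false.
Lemma pbP X : pb X <-> X.
Proof. by rewrite /pb; case: excluded_middle_informative. Qed.

Definition dd n (a : n.-tuple nat) (s : seq nat) (i : nat) := nth 0 (a ++ s) i.

Lemma dd_a n (a : n.-tuple nat) s i : i < n -> dd a s i = nth 0 a i.
Proof. by move=> h; rewrite /dd nth_cat size_tuple h. Qed.

Lemma dd_s n (a : n.-tuple nat) s i : n <= i -> dd a s i = nth 0 s (i - n).
Proof. by move=> h; rewrite /dd nth_cat size_tuple ltnNge h. Qed.

Definition wset k N (f : nat -> nat) (P : {set k.-tuple 'I_N}) : subset_k k :=
  fun t => exists p, p \in P /\ t = map_tuple (fun i : 'I_N => f i) p.

Definition Cond k (Q : quantifier k) N (df f : nat -> nat) :=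
  (forall i j : 'I_N, df i = df j <-> f i = f j) /\
  (forall P : {set k.-tuple 'I_N}, Q (wset f P) <-> Q (wset df P)).

Lemma pick_idx k N (R : 'I_N -> nat -> Prop) (q : k.-tuple nat) :
  (forall j : 'I_k, exists i : 'I_N, R i (tnth q j)) ->
  exists p : k.-tuple 'I_N, forall j, R (tnth p j) (tnth q j).
Proof.
move=> h; have [f hf] := fin_all_exists h.
by exists [tuple f j | j < k] => j; rewrite tnth_mktuple.
Qed.

Lemma map_tupleE k (T U : Type) (f : T -> U) (p : k.-tuple T) (t : k.-tuple U) :
  t = map_tuple f p <-> forall j, tnth t j = f (tnth p j).
Proof.
split; first by move=> -> j; rewrite tnth_map.
by move=> h; apply: eq_from_tnth => j; rewrite h tnth_map.
Qed.

Definition xsq N k : k.-tuple nat := @Tuple k nat (iota N k) (introT eqP (size_iota N k)).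

Lemma upds_xsq N k (e : nat -> nat) (t : k.-tuple nat) :
  (forall j : 'I_k, upds e (xsq N k) t (N + j) = tnth t j) /\
  (forall i, i < N -> upds e (xsq N k) t i = e i).
Proof.
split.
  move=> j; have -> : N + j = nth 0 (iota N k) j by rewrite nth_iota.
  rewrite upds_nth ?iota_uniq ?size_tuple ?size_iota //; by rewrite (tnth_nth 0).
move=> i hi; rewrite upds_notin // mem_iota negb_and -ltnNge hi //.
Qed.


Lemma fd_wset k (Q : quantifier k) N (P : {set k.-tuple 'I_N}) :
  (forall A B : subset_k k, (forall t, A t <-> B t) -> (Q A <-> Q B)) ->
  Fdef Q (fun e => Q (wset e P)).
Proof.
move=> ext.
have F0 : Fdef Q (fun e => exists p, p \in enum P /\
     (forall j, j \in enum {: 'I_k} -> e (N + j) = e (tnth p j))).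
  apply: fd_orl => p _; apply: fd_andl => j _; exact: fd_eq.
have F1 := fd_Q (xsq N k) ext F0.
apply: (fd_ext F1) => e; apply: ext => t.
have [h1 h2] := upds_xsq N e t.
split.
  move=> [p [pP hp]]; exists p; split; first by rewrite mem_enum in pP.
  apply/map_tupleE => j; have := hp j; rewrite mem_enum h1 h2 //; by apply.
move=> [p [pP /map_tupleE hp]]; exists p; split; first by rewrite mem_enum.
by move=> j _; rewrite h1 h2 // hp.
Qed.

Lemma fd_cond k (Q : quantifier k) (s : seq nat) n (a : n.-tuple nat) :
  (forall A B : subset_k k, (forall t, A t <-> B t) -> (Q A <-> Q B)) ->
  Fdef Q (fun e => exists vals, size vals = size (iota n (size s)) /\
     Cond Q (n + size s) (dd a s) (upds e (iota n (size s)) vals)).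
Proof.
move=> ext; apply: fd_exs; apply: fd_and.
  have F : Fdef Q (fun e => forall x, x \in enum {: 'I_(n + size s) * 'I_(n + size s)} ->
      (e x.1 = e x.2 <-> dd a s x.1 = dd a s x.2)).
    by apply: fd_andl => x _; apply: fd_iff; apply: fd_eq.
  apply: (fd_ext F) => e; split.
    by move=> h i j; have := h (i, j); rewrite mem_enum => /(_ isT) /= [h1 h2]; split.
  by move=> h [i j] _ /=; have [h1 h2] := h i j; split.
have F : Fdef Q (fun e => forall P, P \in enum {: {set k.-tuple 'I_(n + size s)}} ->
      (Q (wset e P) <-> Q (wset (dd a s) P))).
  by apply: fd_andl => P _; apply: fd_iff; apply: fd_wset.
apply: (fd_ext F) => e; split; first by move=> h P; apply: h; rewrite mem_enum.
by move=> h P _; apply: h.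
Qed.


Lemma supp_ext k (Q : quantifier k) s : supp Q s ->
  forall A B : subset_k k, (forall t, A t <-> B t) -> (Q A <-> Q B).
Proof. by move=> ss A B h; apply: ss => t _; apply: h. Qed.

Lemma e'_a (e : nat -> nat) n m vals i : i < n -> upds e (iota n m) vals i = e i.
Proof. by move=> h; rewrite upds_notin // mem_iota leqNgt h. Qed.

Lemma e'_s (e : nat -> nat) n m vals i : size vals = m -> n <= i -> i < n + m ->
  upds e (iota n m) vals i = nth 0 vals (i - n).
Proof.
move=> sv h1 h2.
have hj : i - n < m by rewrite ltn_subLR.
have {1}-> : i = nth 0 (iota n m) (i - n) by rewrite nth_iota // subnKC.
by rewrite upds_nth ?iota_uniq ?size_iota.
Qed.

Lemma orbit_to_cond k (Q : quantifier k) s n (a : n.-tuple nat) (e : nat -> nat) :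
  supp Q s -> aut_orbit Q a [tuple e i | i < n] ->
  exists vals, size vals = size (iota n (size s)) /\
     Cond Q (n + size s) (dd a s) (upds e (iota n (size s)) vals).
Proof.
move=> ss [g [[[g' c1 c2] Ag] He]].
exists (map g s); split; first by rewrite size_map size_iota.
set e' := upds _ _ _.
have hE : forall i : 'I_(n + size s), e' i = g (dd a s i).
  move=> [i hi] /=; case: (ltnP i n) => hin.
    rewrite /e' e'_a // dd_a //.
    have -> : e i = tnth [tuple e i | i < n] (Ordinal hin) by rewrite tnth_mktuple.
    by rewrite He tnth_map (tnth_nth 0).
  rewrite /e' e'_s ?size_map // dd_s // (nth_map 0) //.
  by rewrite ltn_subLR.
split.
  move=> i j; rewrite !hE; split=> [->//|]; exact: (can_inj c1).
move=> P; rewrite (Ag (wset (dd a s) P)); apply: (supp_ext ss) => t; split.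
  move=> [p [pP ->]]; exists (map_tuple (fun i : 'I_(n + size s) => dd a s i) p).
  split; first by exists p.
  by apply/map_tupleE => j; rewrite !tnth_map hE.
move=> [a' [[p [pP ->]] ->]]; exists p; split=> //.
by apply/map_tupleE => j; rewrite !tnth_map hE.
Qed.


Definition PX k n (a : n.-tuple nat) s (X : subset_k k) : {set k.-tuple 'I_(n + size s)} :=
  [set p : k.-tuple 'I_(n + size s) | all (fun i : 'I_(n + size s) => n <= i) p &&
     pb (X (map_tuple (fun i : 'I_(n + size s) => dd a s i) p))].

Lemma dd_in n (a : n.-tuple nat) s (i : 'I_(n + size s)) : n <= i -> dd a s i \in s.
Proof.
move=> h; rewrite dd_s // mem_nth //; by rewrite ltn_subLR // ltn_ord.
Qed.

Lemma claim1 k n (a : n.-tuple nat) s (X : subset_k k) (t : k.-tuple nat) :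
  (all (fun x => x \in s) t /\ X t) <-> wset (dd a s) (PX a s X) t.
Proof.
split.
  move=> [/all_tnthP hs Xt].
  have [p hp] : exists p : k.-tuple 'I_(n + size s), forall j,
      n <= tnth p j /\ tnth t j = dd a s (tnth p j).
    apply: (pick_idx (R := fun (i : 'I_(n + size s)) x => n <= i /\ x = dd a s i)) => j.
    have hi : n + index (tnth t j) s < n + size s by rewrite ltn_add2l index_mem hs.
    exists (Ordinal hi) => /=; split; first exact: leq_addr.
    by rewrite dd_s ?leq_addr // addKn nth_index // hs.
  have tE : t = map_tuple (fun i : 'I_(n + size s) => dd a s i) p.
    by apply/map_tupleE => j; have [] := hp j.
  exists p; split=> //; rewrite inE; apply/andP; split.
    by apply/all_tnthP => j; have [] := hp j.
  by apply/pbP; rewrite -tE.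
move=> [p [pP ->]]; move: pP; rewrite inE => /andP [/all_tnthP tl /pbP Xp].
split=> //; apply/all_tnthP => j; rewrite tnth_map; exact: dd_in.
Qed.

Lemma cond_zs k (Q : quantifier k) s n (a : n.-tuple nat) (f : nat -> nat) :
  uniq s -> supp Q s -> (forall s', uniq s' -> supp Q s' -> size s <= size s') ->
  Cond Q (n + size s) (dd a s) f -> forall j, j < size s -> f (n + j) \in s.
Proof.
move=> us ss smin [C1 C2].
pose m := size s.
pose J := [seq j <- iota 0 m | f (n + j) \in s].
pose S' := [seq nth 0 s j | j <- J].
have inJ : forall j, (j \in J) = (j < m) && (f (n + j) \in s).
  by move=> j; rewrite mem_filter mem_iota /= andbC.
suff : m <= size S'.
  rewrite size_map size_filter => hc.
  have hall : all (fun j => f (n + j) \in s) (iota 0 m).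
    by rewrite all_count eqn_leq count_size size_iota hc.
  by move=> j hj; move/allP: hall; apply; rewrite mem_iota.
apply: smin.
  rewrite map_inj_in_uniq ?filter_uniq ?iota_uniq // => x y; rewrite !inJ.
  move=> /andP [hx _] /andP [hy _] /eqP; by rewrite nth_uniq // => /eqP.
pose N := n + size s.
have key : forall X : subset_k k, Q X <-> Q (fun t => X t /\ all (fun x => x \in S') t).
  move=> X.
  pose PX' := [set p : k.-tuple 'I_N | (p \in PX a s X) &&
                 all (fun i : 'I_N => f i \in s) p].
  have e1 : Q X <-> Q (fun t => all (fun x => x \in s) t /\ X t).
    by apply: ss => t ht; split=> [h|[]//].
  have e2 : Q (fun t => all (fun x => x \in s) t /\ X t) <-> Q (wset (dd a s) (PX a s X)).
    by apply: (supp_ext ss) => t; apply: claim1.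
  have e3 : Q (wset f (PX a s X)) <->
            Q (fun t => all (fun x => x \in s) t /\ wset f (PX a s X) t).
    by apply: ss => t ht; split=> [h|[]//].
  have e4 : Q (fun t => all (fun x => x \in s) t /\ wset f (PX a s X) t) <->
            Q (wset f PX').
    apply: (supp_ext ss) => t; split.
      move=> [/all_tnthP hs [p [pP tE]]]; exists p; split=> //.
      rewrite inE pP /=; apply/all_tnthP => j.
      by have := hs j; rewrite tE tnth_map.
    move=> [p [pP tE]]; move: pP; rewrite inE => /andP [pP /all_tnthP hf].
    split; last by exists p.
    by apply/all_tnthP => j; rewrite tE tnth_map.
  have e5 : Q (wset (dd a s) PX') <-> Q (fun t => X t /\ all (fun x => x \in S') t).
    apply: (supp_ext ss) => t; split.
      move=> [p [pP tE]]; move: pP; rewrite inE => /andP [pP /all_tnthP hf].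
      move: pP; rewrite inE => /andP [/all_tnthP tl /pbP Xp].
      split; first by rewrite tE.
      apply/all_tnthP => j; rewrite tE tnth_map dd_s ?tl //.
      apply: map_f; rewrite inJ; apply/andP; split.
        by rewrite ltn_subLR ?tl ?ltn_ord.
      by rewrite subnKC ?tl ?hf.
    move=> [Xt /all_tnthP hS].
    have [p hp] : exists p : k.-tuple 'I_N, forall j,
        [/\ n <= tnth p j, tnth t j = dd a s (tnth p j) & f (tnth p j) \in s].
      apply: (pick_idx (R := fun (i : 'I_N) x => [/\ n <= i, x = dd a s i & f i \in s])) => j.
      have /mapP [jj jjJ ->] := hS j.
      move: jjJ; rewrite inJ => /andP [hjj hf].
      have hi : n + jj < N by rewrite ltn_add2l.
      exists (Ordinal hi) => /=; split=> //; first exact: leq_addr.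
      by rewrite dd_s ?leq_addr // addKn.
    have tE : t = map_tuple (fun i : 'I_N => dd a s i) p.
      by apply/map_tupleE => j; have [] := hp j.
    exists p; split=> //; rewrite !inE; apply/andP; split; first (apply/andP; split).
    - by apply/all_tnthP => j; have [] := hp j.
    - by apply/pbP; rewrite -tE.
    - by apply/all_tnthP => j; have [] := hp j.
  rewrite e1 e2 -C2 e3 e4 C2 e5; done.
move=> A B hAB; rewrite (key A) (key B); apply: (supp_ext ss) => t.
by split=> -[h1 h2]; split=> //; apply/(hAB t h2).
Qed.


Lemma cond_to_orbit k (Q : quantifier k) s n (a : n.-tuple nat) (e : nat -> nat) :
  uniq s -> supp Q s -> (forall s', uniq s' -> supp Q s' -> size s <= size s') ->
  (exists vals, size vals = size (iota n (size s)) /\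
     Cond Q (n + size s) (dd a s) (upds e (iota n (size s)) vals)) ->
  aut_orbit Q a [tuple e i | i < n].
Proof.
move=> us ss smin [vals [sv C]]; rewrite size_iota in sv.
pose m := size s; pose N := n + m.
set f := upds e (iota n (size s)) vals in C.
have zs := cond_zs us ss smin C.
case: C => C1 C2.
have [g [h [gh [hg hgd]]]] : exists g h, cancel g h /\ cancel h g /\
    forall i, i < N -> g (dd a s i) = f i.
  apply: ext_bij => i j hi hj; exact: (C1 (Ordinal hi) (Ordinal hj)).
have ginj := can_inj gh.
have fE : forall i : 'I_N, f i = g (dd a s i) by move=> i; rewrite hgd.
have ddn : forall j, j < m -> dd a s (n + j) = nth 0 s j.
  by move=> j hj; rewrite dd_s ?leq_addr // addKn.
have zcover : forall y, y \in s -> exists j, j < m /\ f (n + j) = y.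
  pose z := [seq f (n + j) | j <- iota 0 m].
  have uz : uniq z.
    rewrite map_inj_in_uniq ?iota_uniq // => x y; rewrite !mem_iota /= => hx hy e1.
    have hx' : n + x < N by rewrite ltn_add2l.
    have hy' : n + y < N by rewrite ltn_add2l.
    have := (proj2 (C1 (Ordinal hx') (Ordinal hy'))) e1; rewrite /= !ddn //.
    by move/eqP; rewrite nth_uniq // => /eqP.
  have sub : {subset z <= s}.
    by move=> y /mapP [j]; rewrite mem_iota /= => hj ->; apply: zs.
  have szs : size s <= size z by rewrite size_map size_iota.
  have [_ eqz] := uniq_min_size uz sub szs.
  move=> y ys; have : y \in z by rewrite eqz.
  by move/mapP => [j]; rewrite mem_iota /= => hj ->; exists j.
have gS : forall x, x \in s -> g x \in s.
  move=> x xs; have hi : n + index x s < N by rewrite ltn_add2l index_mem.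
  have := fE (Ordinal hi); rewrite /= ddn ?index_mem // nth_index // => <-.
  by apply: zs; rewrite index_mem.
have ginvS : forall x, g x \in s -> x \in s.
  move=> x /zcover [j [hj fj]].
  have hi : n + j < N by rewrite ltn_add2l.
  move: fj; rewrite (fE (Ordinal hi)) /= ddn // => /ginj <-.
  exact: mem_nth.
exists g; split; last first.
  apply/map_tupleE => j; rewrite tnth_mktuple (tnth_nth 0).
  have hj : j < N by apply: (leq_trans (ltn_ord j)); exact: leq_addr.
  by rewrite -(dd_a a s (ltn_ord j)) hgd // /f e'_a.
split; first exact: (Bijective gh hg).
move=> A.
have e1 : Q A <-> Q (fun t => all (fun x => x \in s) t /\ A t).
  by apply: ss => t ht; split=> [hh|[]//].
have e2 : Q (image_set g A) <-> Q (fun t => all (fun x => x \in s) t /\ image_set g A t).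
  by apply: ss => t ht; split=> [hh|[]//].
rewrite e1 e2 (supp_ext ss (claim1 a s A)) -C2.
apply: (supp_ext ss) => t; split.
  move=> [p [pP tE]].
  have [hs Ap] : all (fun x => x \in s) (map_tuple (fun i : 'I_N => dd a s i) p) /\
       A (map_tuple (fun i : 'I_N => dd a s i) p) by apply/(claim1 a s A); exists p.
  have tE' : t = map_tuple g (map_tuple (fun i : 'I_N => dd a s i) p).
    by apply/map_tupleE => j; rewrite tE !tnth_map fE.
  split; last by exists (map_tuple (fun i : 'I_N => dd a s i) p).
  apply/all_tnthP => j; rewrite tE' tnth_map; apply: gS.
  by move/all_tnthP: hs; apply.
move=> [/all_tnthP hs [a' [Aa' tE]]].
have ha' : all (fun x => x \in s) a'.
  by apply/all_tnthP => j; apply: ginvS; have := hs j; rewrite tE tnth_map.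
have [p [pP a'E]] := (proj1 (claim1 a s A a')) (conj ha' Aa').
exists p; split=> //; apply/map_tupleE => j.
by rewrite tE a'E !tnth_map fE.
Qed.


Theorem proposition18 (k : nat) (Q : quantifier k) :
  clopen Q ->
  forall (n : nat) (a : n.-tuple nat), definable Q (aut_orbit Q a).
Proof.
move=> cQ n a.
have [s [us [ss smin]]] := min_supp cQ.
have [phi hphi] := fd_cond s a (supp_ext ss).
exists phi => e; rewrite hphi; split; [exact: cond_to_orbit | exact: orbit_to_cond].
Qed.
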